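(* Let $f\colon\mathbb R\to\mathbb R$ be continuous with $|f(x)|\leqslant a\cosh(bx)$ for all $x$, for some $a>0$, $b\in\mathbb R$. Fix $\lambda>0$, let $P_n = e^{-\lambda}\lambda^n/n!$, and for $k\geqslant1$ let $h_k\colon y\mapsto f(y)/k$. Let $\mathbb P$ be the set of compactly supported Borel probability measures on $\mathbb R$ with the topology in which $\rho_n\to\rho$ iff $\int\phi\,d\rho_n\to\int\phi\,d\rho$ for all continuous compactly supported $\phi\colon\mathbb R\to\mathbb R$. For $x\in\mathbb R$ define the operators $$\Sigma^f_x(\rho) = \sum_{n=0}^\infty P_n\,(h_{n+1})_\star\big(\delta_x*\rho^{*n}\big),\qquad \Sigma^f(\rho) = \sum_{n=0}^\infty P_n\,(h_{n+1})_\star\big(\rho^{*(n+1)}\big),$$ where $(h_k)_\star$ is pushforward, $*$ is convolution and $\rho^{*0}=\delta_0$. Then $\Sigma^f_x$ and $\Sigma^f$ are continuous on $\mathbb P$ (with values in probability measures on $\mathbb R$ with the same weak topology).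
   Context: $\delta_a$ is the Dirac measure at $a$; $\cosh$ is the hyperbolic cosine. *)

(* Defs.v *)
From HB Require Import structures.
From mathcomp Require Import all_boot all_order all_algebra.
From mathcomp Require Import all_classical all_reals all_analysis.
Set Implicit Arguments. Unset Strict Implicit. Unset Printing Implicit Defensive.
Import Order.TTheory GRing.Theory Num.Theory.
Import numFieldNormedType.Exports.
Local Open Scope classical_set_scope.
Local Open Scope ring_scope.

Section Defs.
Variable R : realType.
Local Open Scope ereal_scope.

Definition cosh (x : R) : R := ((expR x + expR (- x)) / 2)%R.

Definition poissonP (lam : R) (n : nat) : R :=
  (expR (- lam) * lam ^+ n / (n`!)%:R)%R.

Definition hk (f : R -> R) (k : nat) : R -> R := fun y => (f y / k%:R)%R.

Definition push (mu : set R -> \bar R) (g : R -> R) : set R -> \bar R :=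
  fun A => mu (g @^-1` A).

Definition conv (mu nu : set R -> \bar R) : set R -> \bar R :=
  fun A => \int[mu]_x nu ((fun y => x + y)%R @^-1` A).

Definition delta (a : R) : set R -> \bar R := @dirac _ R a R.

Fixpoint convn (rho : set R -> \bar R) (n : nat) : set R -> \bar R :=
  match n with
  | 0%N => delta 0%R
  | n'.+1 => conv rho (convn rho n')
  end.

Definition SigmaX (f : R -> R) (lam : R) (x : R) (rho : set R -> \bar R)
  : set R -> \bar R :=
  fun A => \sum_(0 <= n <oo)
    ((poissonP lam n)%:E * push (conv (delta x) (convn rho n)) (hk f n.+1) A).

Definition Sigma (f : R -> R) (lam : R) (rho : set R -> \bar R)
  : set R -> \bar R :=
  fun A => \sum_(0 <= n <oo)
    ((poissonP lam n)%:E * push (convn rho n.+1) (hk f n.+1) A).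

Definition is_probability (mu : set R -> \bar R) : Prop :=
  [/\ mu set0 = 0, (forall A, measurable A -> 0 <= mu A),
      semi_sigma_additive mu & mu setT = 1].

Definition compactly_supported (mu : set R -> \bar R) : Prop :=
  exists K : set R, compact K /\ mu (~` K) = 0.

Definition test_fun (phi : R -> R) : Prop :=
  continuous phi /\ compact (closure [set x | phi x != 0%R]).

Definition weak_cvg (mus : nat -> set R -> \bar R) (mu : set R -> \bar R)
  : Prop :=
  forall phi : R -> R, test_fun phi ->
    (fun n => \int[mus n]_x (phi x)%:E) @ \oo --> \int[mu]_x (phi x)%:E.

Definition inP (mu : set R -> \bar R) : Prop :=
  is_probability mu /\ compactly_supported mu.

Definition continuous_on_P (S : (set R -> \bar R) -> (set R -> \bar R))
  : Prop :=
  (forall rho, inP rho -> is_probability (S rho)) /\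
  (forall (rhos : nat -> set R -> \bar R) (rho : set R -> \bar R),
     (forall n, inP (rhos n)) -> inP rho -> weak_cvg rhos rho ->
     weak_cvg (fun n => S (rhos n)) (S rho)).

End Defs.

(* Main.v *)
Require Import Defs.
From HB Require Import structures.
From mathcomp Require Import all_boot all_order all_algebra.
From mathcomp Require Import all_classical all_reals all_analysis.
From mathcomp Require Import ring lra.
Import Order.TTheory GRing.Theory Num.Theory.
Import numFieldNormedType.Exports.
Local Open Scope ring_scope.

Module Aux.
Set Implicit Arguments. Unset Strict Implicit. Unset Printing Implicit Defensive.
Local Open Scope classical_set_scope.
Local Open Scope ring_scope.

Section P1.
Variable R : realType.
Local Open Scope ereal_scope.

Definition mr (mu : set R -> \bar R) : set R -> \bar R :=
  fun A => if `[< measurable A >] then mu A else 0.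

Lemma mrE mu A : measurable A -> mr mu A = mu A.
Proof. by move=> mA; rewrite /mr asboolT. Qed.

Section pk.
Variables (mu : set R -> \bar R) (hmu : is_probability mu).

Let mr0 : mr mu set0 = 0.
Proof. by rewrite mrE //; case: hmu. Qed.

Let mr_ge0 A : 0 <= mr mu A.
Proof. rewrite /mr; case: asboolP => // mA; by case: hmu => _ h _ _; apply: h. Qed.

Let mr_sigma : semi_sigma_additive (mr mu).
Proof.
move=> F mF tF mUF; rewrite mrE//.
under eq_fun do under eq_bigr do rewrite mrE//.
by case: hmu => _ _ h _; apply: h.
Qed.

Let mrT : mr mu setT = 1.
Proof. by rewrite mrE //; case: hmu. Qed.

Definition mrp := mr mu.
HB.instance Definition _ := isMeasure.Build _ _ _ mrp mr0 mr_ge0 mr_sigma.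
HB.instance Definition _ := Measure_isProbability.Build _ _ _ mrp mrT.
Definition pk : probability R R := mrp.

Lemma pkE A : measurable A -> pk A = mu A.
Proof. exact: mrE. Qed.

End pk.

Section meq.
Context d (T : measurableType d).
Local Open Scope ereal_scope.
Import HBNNSimple.

Definition meq (m1 m2 : set T -> \bar R) := forall A, measurable A -> m1 A = m2 A.

Let eqmi0 (m2 m1 : set T -> \bar R) D (f : T -> \bar R) :
  (forall A, measurable A -> A `<=` D -> m1 A = m2 A) ->
  [set sintegral m1 h | h in
    [set h : {nnsfun T >-> R} | (forall x, (h x)%:E <= (f \_ D) x)]] `<=`
  [set sintegral m2 h | h in
    [set h : {nnsfun T >-> R} | (forall x, (h x)%:E <= (f \_ D) x)]].
Proof.
move=> m12 _ [h hfD <-] /=; exists h => //; apply: eq_fsbigr => r _.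
have [hrD|hrD] := pselect (h @^-1` [set r] `<=` D); first by rewrite m12.
suff : r = 0%R by move=> ->; rewrite !mul0e.
apply: contra_notP hrD => /eqP r0 t/= htr.
have := hfD t.
rewrite /patch/=; case: ifPn; first by rewrite inE.
move=> tD.
move: r0; rewrite -htr => ht0.
by rewrite le_eqVlt eqe (negbTE ht0)/= lte_fin// ltNge// fun_ge0.
Qed.

Lemma meq_int (m1 m2 : set T -> \bar R) D (f : T -> \bar R) :
  meq m1 m2 -> \int[m1]_(x in D) f x = \int[m2]_(x in D) f x.
Proof.
move=> m12; rewrite /integral funepos_restrict funeneg_restrict.
by congr (ereal_sup _ - ereal_sup _); rewrite eqEsubset; split;
  apply: eqmi0 => A mA _; rewrite ?m12.
Qed.

End meq.

Section probs.
Local Open Scope ereal_scope.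

Lemma mpre d1 d2 (T1 : measurableType d1) (T2 : measurableType d2) (g : T1 -> T2) A :
  measurable_fun setT g -> measurable A -> measurable (g @^-1` A).
Proof. by move=> mg mA; rewrite -[_ @^-1` _]setTI; apply: mg. Qed.

Lemma is_prob_meq (m1 m2 : set R -> \bar R) :
  is_probability m2 -> meq m1 m2 -> is_probability m1.
Proof.
case=> h0 h1 h2 h3 e; split.
- by rewrite e.
- by move=> A mA; rewrite e //; apply: h1.
- move=> F mF tF mUF; rewrite e//.
  under eq_fun do under eq_bigr do rewrite e//.
  exact: h2.
- by rewrite e.
Qed.

Lemma prob_is (P : probability R R) : is_probability P.
Proof.
split => //; first exact: measure_semi_sigma_additive.
exact: probability_setT.
Qed.

Lemma pk_meq mu (h : is_probability mu) : meq (pk h) mu.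
Proof. by move=> A mA; rewrite pkE. Qed.

Lemma push_prob (mu : set R -> \bar R) (g : R -> R) :
  is_probability mu -> measurable_fun setT g -> is_probability (push mu g).
Proof.
case=> h0 h1 h2 h3 mg; split.
- by rewrite /push preimage_set0.
- by move=> A mA; apply: h1; exact: mpre.
- move=> F mF tF mUF; rewrite /push preimage_bigcup.
  apply: h2.
  + by move=> n; exact: mpre.
  + apply/trivIsetP => /= i j _ _ ij; rewrite -preimage_setI.
    by move/trivIsetP : tF => /(_ _ _ _ _ ij) ->//; rewrite preimage_set0.
  + by rewrite -preimage_bigcup; exact: mpre.
- by rewrite /push preimage_setT.
Qed.

Lemma meq_push (m1 m2 : set R -> \bar R) (g : R -> R) :
  meq m1 m2 -> measurable_fun setT g -> meq (push m1 g) (push m2 g).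
Proof. by move=> e mg A mA; rewrite /push e //; exact: mpre. Qed.

Lemma measurable_shift (x : R) : measurable_fun setT (fun y : R => (x + y)%R).
Proof.
apply: measurable_realfun.continuous_measurable_fun => y.
by apply: continuousD; [exact: cst_continuous|exact: (@cvg_id _ (nbhs y))].
Qed.

Lemma meq_conv (m1 m1' m2 m2' : set R -> \bar R) :
  meq m1 m1' -> meq m2 m2' -> meq (Defs.conv m1 m2) (Defs.conv m1' m2').
Proof.
move=> e1 e2 A mA; rewrite /Defs.conv (meq_int _ _ e1).
congr (integral _ _ _); apply/funext => x; rewrite e2 //; exact: mpre (measurable_shift x) mA.
Qed.

End probs.

Section convs.
Local Open Scope ereal_scope.

Definition addRR (z : R * R) : R := (z.1 + z.2)%R.

Lemma measurable_addRR : measurable_fun setT addRR.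
Proof. exact: (measurable_realfun.measurable_funD measurable_fst measurable_snd). Qed.

Lemma push_prob_gen d (T : measurableType d) (m : {measure set T -> \bar R}) (g : T -> R) :
  measurable_fun setT g -> m setT = 1 -> is_probability (pushforward m g).
Proof.
move=> mg m1; split.
- by rewrite /pushforward preimage_set0.
- by move=> A mA; rewrite /pushforward; exact: measure_ge0.
- move=> F mF tF mUF; rewrite /pushforward preimage_bigcup.
  apply: measure_semi_sigma_additive.
  + by move=> n; exact: mpre.
  + apply/trivIsetP => /= i j _ _ ij; rewrite -preimage_setI.
    by move/trivIsetP : tF => /(_ _ _ _ _ ij) ->//; rewrite preimage_set0.
  + by rewrite -preimage_bigcup; exact: mpre.
- by rewrite /pushforward preimage_setT.
Qed.

Lemma convE (P Q : probability R R) : Defs.conv P Q = pushforward (P \x Q) addRR.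
Proof.
apply/funext => A; rewrite /Defs.conv /push /product_measure1.
congr (integral _ _ _); apply/funext => x /=; congr (Q _).
by apply/seteqP; split => y; rewrite /xsection /= inE.
Qed.

Lemma prod_prob (P Q : probability R R) : (P \x Q) setT = 1.
Proof. rewrite -setXTT product_measure1E //; transitivity (1 * 1 : \bar R); [congr (_ * _); exact: probability_setT | exact: mule1]. Qed.


Lemma conv_prob (P Q : probability R R) : is_probability (Defs.conv P Q).
Proof. rewrite convE; apply: push_prob_gen; [exact: measurable_addRR|exact: prod_prob]. Qed.

End convs.
End P1.

Section P2.
Variable R : realType.
Implicit Types P Q : probability R R.

Definition Ex P (g : R -> R) : R := (\int[P]_x g x)%R.

Definition BM (g : R -> R) := measurable_fun setT g /\ exists M : R, forall x, `|g x| <= M.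

Lemma BM_integrable d (T : measurableType d) (m : {measure set T -> \bar R}) (g : T -> R) :
  (m setT < +oo)%E -> measurable_fun setT g -> (exists M : R, forall x, `|g x| <= M) ->
  m.-integrable setT (EFin \o g).
Proof.
move=> mfin mg [M hM]; apply: measurable_bounded_integrable => //.
exists M; split; first exact: num_real.
move=> y My x _; exact: le_trans (hM x) (ltW My).
Qed.

Lemma PT P : P setT = 1%E.
Proof. exact: probability_setT. Qed.

Lemma BM_int P g : BM g -> P.-integrable setT (EFin \o g).
Proof. case=> mg hM; apply: BM_integrable => //. by rewrite [X in (X < _)%E](_ : _ = 1%E) ?ltry //; exact: probability_setT. Qed.

Lemma ExE P g : BM g -> (\int[P]_x (g x)%:E)%E = (Ex P g)%:E.
Proof. by move=> h; rewrite /Ex /Rintegral fineK //; apply: integrable_fin_num => //; exact: BM_int. Qed.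


Definition pconv P Q : probability R R := pk (conv_prob P Q).

Lemma BM_shift g x : BM g -> BM (fun y => g (x + y)).
Proof.
case=> mg [M hM]; split; last by exists M.
exact: (measurableT_comp mg (measurable_shift x)).
Qed.

Lemma Ex_pconv P Q g : BM g ->
  Ex (pconv P Q) g = Ex P (fun x => Ex Q (fun y => g (x + y))).
Proof.
move=> hg; have [mg [M hM]] := hg.
have mga : measurable_fun setT (g \o (@addRR R)) by exact: measurableT_comp mg (@measurable_addRR R).
have ig : (P \x Q)%E.-integrable setT (EFin \o (g \o (@addRR R))).
  apply: BM_integrable => //; last by exists M => z; exact: hM.
  by rewrite [X in (X < _)%E](_ : _ = 1%E) ?ltry //; exact: prod_prob.
rewrite /Ex /Rintegral; congr fine.
rewrite (meq_int _ _ (pk_meq _)) convE integral_pushforward //;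
  [|exact: (@measurable_addRR R)|exact/measurable_realfun.measurable_EFinP].
rewrite preimage_setT -integral12_prod_meas1 //.
apply: eq_integral => x _; rewrite /fubini_F /=.
by rewrite (ExE _ (BM_shift x hg)).
Qed.

End P2.

Section P3.
Variable R : realType.
Implicit Types (P Q : probability R R) (g h : R -> R).

Lemma BM_cst (c : R) : BM (fun _ : R => c).
Proof. by split; [exact: measurable_cst| exists `|c|]. Qed.

Lemma BM_add g h : BM g -> BM h -> BM (fun x => g x + h x).
Proof.
move=> [mg [M hM]] [mh [N hN]]; split.
  exact: measurable_realfun.measurable_funD.
exists (M + N) => x; apply: le_trans (ler_normD _ _) _; exact: lerD.
Qed.

Lemma BM_opp g : BM g -> BM (fun x => - g x).
Proof.
move=> [mg [M hM]]; split; last by exists M => x; rewrite normrN.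
exact: measurableT_comp mg.
Qed.

Lemma BM_sub g h : BM g -> BM h -> BM (fun x => g x - h x).
Proof. by move=> bg bh; apply: BM_add bg (BM_opp bh). Qed.

Lemma BM_mul g h : BM g -> BM h -> BM (fun x => g x * h x).
Proof.
move=> [mg [M hM]] [mh [N hN]]; split.
  exact: measurable_realfun.measurable_funM.
exists (M * N) => x; rewrite normrM; apply: ler_pM => //; exact: hM || exact: hN.
Qed.

Lemma BM_abs g : BM g -> BM (fun x => `|g x|).
Proof.
move=> [mg [M hM]]; split; last by exists M => x; rewrite normr_id.
exact: measurableT_comp mg.
Qed.

Lemma Ex_cst P (c : R) : Ex P (fun _ => c) = c.
Proof.
rewrite /Ex Rintegral_cst //.
by rewrite [X in fine X](_ : _ = 1%E) ?mulr1 //; exact: probability_setT.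
Qed.

Lemma ExD P g h : BM g -> BM h -> Ex P (fun x => g x + h x) = Ex P g + Ex P h.
Proof. by move=> bg bh; rewrite /Ex RintegralD //; exact: BM_int. Qed.

Lemma ExB P g h : BM g -> BM h -> Ex P (fun x => g x - h x) = Ex P g - Ex P h.
Proof. by move=> bg bh; rewrite /Ex RintegralB //; exact: BM_int. Qed.

Lemma ExZ P (c : R) g : BM g -> Ex P (fun x => c * g x) = c * Ex P g.
Proof. by move=> bg; rewrite /Ex RintegralZl //; exact: BM_int. Qed.

Lemma Ex_le P g h : BM g -> BM h -> (forall x, g x <= h x) -> Ex P g <= Ex P h.
Proof. by move=> bg bh gh; rewrite /Ex le_Rintegral //; exact: BM_int. Qed.

Lemma Ex_abs P g : BM g -> `|Ex P g| <= Ex P (fun x => `|g x|).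
Proof. by move=> bg; rewrite /Ex le_normr_Rintegral //; exact: BM_int. Qed.

Lemma Ex_bound P g (M : R) : BM g -> (forall x, `|g x| <= M) -> `|Ex P g| <= M.
Proof.
move=> bg hM; apply: le_trans (Ex_abs P bg) _.
rewrite -[leRHS](Ex_cst P); apply: Ex_le => //; [exact: BM_abs|exact: BM_cst].
Qed.

Lemma Ex_ge0 P g : BM g -> (forall x, 0 <= g x) -> 0 <= Ex P g.
Proof. by move=> bg g0; rewrite -(Ex_cst P 0); apply: Ex_le => //; exact: BM_cst. Qed.

End P3.

Section P4.
Variable R : realType.
Implicit Types (P Q : probability R R) (g h : R -> R).

Definition BC g := continuous g /\ exists M : R, forall x, `|g x| <= M.

Lemma BC_BM g : BC g -> BM g.
Proof. by case=> cg hM; split => //; exact: measurable_realfun.continuous_measurable_fun. Qed.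

Lemma cont_add g h : continuous g -> continuous h -> continuous (fun x => g x + h x).
Proof. by move=> cg ch x; apply: continuousD; [exact: cg|exact: ch]. Qed.

Lemma cont_opp g : continuous g -> continuous (fun x => - g x).
Proof. by move=> cg x; apply: continuousN; exact: cg. Qed.

Lemma cont_mul g h : continuous g -> continuous h -> continuous (fun x => g x * h x).
Proof. by move=> cg ch x; apply: continuousM; [exact: cg|exact: ch]. Qed.

Lemma cont_cst (c : R) : continuous (fun _ : R => c).
Proof. by move=> x; exact: cst_continuous. Qed.

Lemma cont_id : continuous (fun x : R => x).
Proof. by move=> x; exact: cvg_id. Qed.

Lemma cont_abs g : continuous g -> continuous (fun x => `|g x|).
Proof. by move=> cg x; apply: continuous_comp; [exact: cg|exact: norm_continuous]. Qed.

Lemma cont_comp g h : continuous g -> continuous h -> continuous (fun x => g (h x)).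
Proof. by move=> cg ch x; apply: continuous_comp; [exact: ch|exact: cg]. Qed.

Lemma BC_cst (c : R) : BC (fun _ => c).
Proof. by split; [exact: cont_cst|exists `|c|]. Qed.

Lemma BC_add g h : BC g -> BC h -> BC (fun x => g x + h x).
Proof.
move=> [cg [M hM]] [ch [N hN]]; split; first exact: cont_add.
exists (M + N) => x; apply: le_trans (ler_normD _ _) _; exact: lerD.
Qed.

Lemma BC_opp g : BC g -> BC (fun x => - g x).
Proof. by move=> [cg [M hM]]; split; [exact: cont_opp|exists M => x; rewrite normrN]. Qed.

Lemma BC_sub g h : BC g -> BC h -> BC (fun x => g x - h x).
Proof. by move=> bg bh; apply: BC_add bg (BC_opp bh). Qed.

Lemma BC_mul g h : BC g -> BC h -> BC (fun x => g x * h x).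
Proof.
move=> [cg [M hM]] [ch [N hN]]; split; first exact: cont_mul.
exists (M * N) => x; rewrite normrM; apply: ler_pM => //; exact: hM || exact: hN.
Qed.

Lemma BC_abs g : BC g -> BC (fun x => `|g x|).
Proof. by move=> [cg [M hM]]; split; [exact: cont_abs|exists M => x; rewrite normr_id]. Qed.

Lemma BC_comp g h : BC g -> continuous h -> BC (fun x => g (h x)).
Proof. by move=> [cg [M hM]] ch; split; [exact: cont_comp|exists M]. Qed.

Definition tent (L : R) : R -> R :=
  fun x => Num.min 1 (Num.max 0 (L + 1 - `|x|)).

Lemma tent_cont L : continuous (tent L).
Proof.
rewrite /tent.
have -> : (fun x => Num.min 1 (Num.max 0 (L + 1 - `|x|))) =
   ((fun _ : R => 1) \min ((fun _ : R => 0) \max (fun x : R => L + 1 - `|x|))) by [].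
apply: min_fun_continuous; first exact: cont_cst.
apply: max_fun_continuous; first exact: cont_cst.
by apply: cont_add; [exact: cont_cst|apply: cont_opp; apply: cont_abs; exact: cont_id].
Qed.

Lemma tent_ge0 L x : 0 <= tent L x.
Proof. by rewrite /tent le_min ler01 le_max lexx. Qed.

Lemma tent_le1 L x : tent L x <= 1.
Proof. by rewrite /tent ge_min lexx. Qed.

Lemma tent1 L x : `|x| <= L -> tent L x = 1.
Proof.
move=> hx; rewrite /tent; apply/min_idPl.
rewrite le_max; apply/orP; right; rewrite lerBrDr; lra.
Qed.

Lemma tent0 L x : L + 1 <= `|x| -> tent L x = 0.
Proof.
move=> hx; rewrite /tent.
have -> : Num.max 0 (L + 1 - `|x|) = 0 by apply/max_idPl; rewrite subr_le0.
by apply/min_idPr; exact: ler01.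
Qed.

Lemma tent_BC L : BC (tent L).
Proof.
split; first exact: tent_cont.
by exists 1 => x; rewrite ger0_norm ?tent_ge0 ?tent_le1.
Qed.


Lemma bounded_get (A : set R) : compact A -> exists M : R, forall x, A x -> `|x| <= M.
Proof.
move=> /compact_bounded [M [_ hM]]; exists (M + 1) => x Ax.
by apply: (hM (M + 1)) => //; lra.
Qed.

Lemma test_supp g : test_fun g -> exists L : R, forall x, L < `|x| -> g x = 0.
Proof.
case=> _ /bounded_get [L hL]; exists L => x Lx.
apply/eqP; apply/negPn/negP => gx.
have : `|x| <= L by apply: hL; apply: subset_closure.
by rewrite leNgt Lx.
Qed.

Lemma test_BC g : test_fun g -> BC g.
Proof.
move=> tg; have [L hL] := test_supp tg; case: tg => cg _; split => //.
have : compact [set g x | x in `[-L, L]].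
  apply: continuous_compact; last exact: segment_compact.
  exact: continuous_subspaceT.
move=> /bounded_get [M hM]; exists `|M| => x.
have [xL|xL] := leP `|x| L.
  apply: le_trans (ler_norm _); apply: hM; exists x => //.
  by rewrite /= in_itv /= -ler_norml.
by rewrite hL // normr0.
Qed.

Lemma test_of_supp g (c : R) : continuous g -> (forall x, g x != 0 -> `|x| <= c) -> test_fun g.
Proof.
move=> cg hc; split => //.
apply: (@subclosed_compact _ _ `[- c, c]); [exact: closed_closure|exact: segment_compact|].
rewrite [X in _ `<=` X](closure_id _).1; last exact: itv_closed.
apply: closureS => x /= gx; rewrite in_itv /= -ler_norml; exact: hc.
Qed.

Lemma tent_test L : test_fun (tent L).
Proof.
apply: (test_of_supp (c := L + 1)); first exact: tent_cont.
move=> x; apply: contraR; rewrite -ltNge => hx; rewrite tent0 //; exact: ltW.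
Qed.

Lemma tentM_test L g : continuous g -> test_fun (fun x => g x * tent L x).
Proof.
move=> cg; apply: (test_of_supp (c := L + 1)); first by apply: cont_mul => //; exact: tent_cont.
move=> x; apply: contraR; rewrite -ltNge => hx; rewrite tent0 ?mulr0 //; exact: ltW.
Qed.


Lemma test_uc g : test_fun g -> forall e : R, 0 < e ->
  exists2 d : R, 0 < d & forall x y, `|x - y| < d -> `|g x - g y| < e.
Proof.
move=> tg e e0; have [L hL] := test_supp tg; have cg := tg.1.
have K : compact `[- (L + 1), L + 1] by exact: segment_compact.
move/compact_near_coveringP : K => /(_ R (0:R)^'+
  (fun d x => forall y, `|x - y| < d -> `|g x - g y| < e) _).
have Hc : forall x : R, [set` `[- (L + 1), L + 1]] x ->
    \forall x' \near x & i \near 0^'+,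
       (fun d x => forall y, `|x - y| < d -> `|g x - g y| < e) i x'.
  move=> x _.
  have /nbhs_ballP [η /= η0 hη] : \forall z \near x, `|g x - g z| < e / 2.
    have e2 : 0 < e / 2 by rewrite divr_gt0.
    exact: (cvgr_dist_lt _ _ (cg x) _ e2).

  near=> x' d; rewrite /= => y xy.
  have h1 : `|x - x'| < η / 2.
    near: x'; apply/nbhs_ballP; exists (η / 2) => //=; first by rewrite divr_gt0.
  have h2 : d < η / 2 by near: d; apply: nbhs_right_lt; rewrite divr_gt0.
  have gx' : `|g x - g x'| < e / 2 by apply: hη; rewrite /ball /=; lra.
  have gy : `|g x - g y| < e / 2.
    apply: hη; rewrite /ball /=.
    have := ler_normD (x - x') (x' - y); rewrite addrA subrK => hh.
    by apply: le_lt_trans hh _; lra.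
  have := ler_normD (g x' - g x) (g x - g y); rewrite addrA subrK => hh.
  by apply: le_lt_trans hh _; rewrite distrC; lra.
move=> /(_ Hc) /nbhs_ballP [δ /= δ0 Hδ].
have Hd : forall x, [set` `[- (L + 1), L + 1]] x -> forall y, `|x - y| < δ / 2 -> `|g x - g y| < e.
  move=> x Kx; apply: (Hδ (δ / 2)); [|by rewrite divr_gt0|by []].
  by rewrite /ball /= sub0r normrN ger0_norm ?divr_ge0 ?ltW //; lra.
exists (Num.min (δ / 2) 1); first by rewrite lt_min ltr01 divr_gt0.
move=> x y; rewrite lt_min => /andP [xy1 xy2].
have [xL|xL] := leP `|x| (L + 1).
  by apply: Hd => //=; rewrite in_itv /= -ler_norml.
have yL : L < `|y|.
  have := ler_normD (x - y) y; rewrite subrK => hh.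
  lra.
by rewrite hL ?(hL y) // ?subrr ?normr0 //; lra.
Unshelve. all: by end_near.
Qed.


Lemma tent_cvg1 P : Ex P (tent n%:R) @[n --> \oo] --> (1:R).
Proof.
have := @dominated_convergence _ _ R P setT measurableT
  (fun n x => (tent n%:R x)%:E) (cst 1%E) (cst 1%E).
case.
- move=> n; apply/measurable_realfun.measurable_EFinP.
  exact: (BC_BM (tent_BC _)).1.
- exact: measurable_cst.
- apply: aeW => x _; apply: cvg_near_cst.
  near=> n; rewrite tent1 //; near: n; exact: nbhs_infty_ger.
- have := BM_int P (BM_cst 1); by [].
- apply: aeW => x n _; rewrite /= lee_fin ger0_norm ?tent_ge0 ?tent_le1 //.
move=> _ _ h.
have h1 : (\int[P]_x (cst 1%E x))%E = (1%R)%:E.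
  by rewrite (ExE P (BM_cst 1)) Ex_cst.
rewrite h1 in h.
by apply: (fine_cvg h).
Unshelve. all: by end_near.
Qed.

Lemma tight P (e : R) : 0 < e -> exists L : R, Ex P (fun x => 1 - tent L x) <= e.
Proof.
move=> e0; have := tent_cvg1 P.
move=> /cvgrPdist_le /(_ e e0) [N _ hN].
exists N%:R; rewrite ExB ?Ex_cst; [|exact: BM_cst|exact: (BC_BM (tent_BC _))].
have := hN N (leqnn N); rewrite /= => hh.
by apply: le_trans (ler_norm _) hh.
Qed.

End P4.

Section P5.
Variable R : realType.
Implicit Types (P Q : probability R R) (g h : R -> R).

Definition wconv (Ps : nat -> probability R R) P :=
  forall g, BC g -> Ex (Ps n) g @[n --> \oo] --> Ex P g.
Definition vconv (Ps : nat -> probability R R) P :=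
  forall g, test_fun g -> Ex (Ps n) g @[n --> \oo] --> Ex P g.

Lemma split_bound Q g (M : R) L : BC g -> (forall x, `|g x| <= M) ->
  `|Ex Q g - Ex Q (fun x => g x * tent L x)| <= M * (1 - Ex Q (tent L)).
Proof.
move=> bg hM; have bm := BC_BM bg; have bt := BC_BM (tent_BC (R:=R) L).
rewrite -ExB //; last exact: BM_mul.
apply: le_trans (Ex_abs _ _) _; first by apply: BM_sub => //; exact: BM_mul.
rewrite -[X in _ <= M * (X - _)](Ex_cst Q 1) -ExB //; last exact: BM_cst.
rewrite -ExZ; last by apply: BM_sub => //; exact: BM_cst.
apply: Ex_le.
- by apply: BM_abs; apply: BM_sub => //; exact: BM_mul.
- by apply: BM_mul; [exact: BM_cst|apply: BM_sub => //; exact: BM_cst].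
move=> x; have t0 := tent_ge0 L x; have t1 := tent_le1 L x.
rewrite -{1}[g x]mulr1 -mulrBr normrM [`|1 - _|]ger0_norm; last by rewrite subr_ge0.
by apply: ler_wpM2r => //; rewrite subr_ge0.
Qed.

Lemma BC_bound0 g : BC g -> exists2 M : R, 0 <= M & forall x, `|g x| <= M.
Proof.
case=> _ [M hM]; exists M => //; exact: le_trans (normr_ge0 _) (hM 0).
Qed.

Theorem vconv_wconv Ps P : vconv Ps P -> wconv Ps P.
Proof.
move=> hv g bg; have [M M0 hM] := BC_bound0 bg.
apply/cvgrPdist_le => e e0.
pose η := e / (1 + 3 * M).
have η0 : 0 < η by rewrite divr_gt0 //; lra.
have eη : (1 + 3 * M) * η = e by rewrite /η mulrC divfK //; lra.
have [L hL] := tight P η0.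
have bt := BC_BM (tent_BC (R:=R) L).
rewrite ExB ?Ex_cst in hL; [|exact: BM_cst|exact: bt].
have c1 := cvgr_dist_le _ _ (hv _ (tentM_test L bg.1)) _ η0.
have c2 := cvgr_dist_le _ _ (hv _ (tent_test L)) _ η0.
near=> n.
have a1 := split_bound P L bg hM.
have a2 := split_bound (Ps n) L bg hM.
have a3 : `|Ex P (fun x => g x * tent L x) - Ex (Ps n) (fun x => g x * tent L x)| <= η.
  by near: n; exact: c1.
have a4 : `|Ex P (tent L) - Ex (Ps n) (tent L)| <= η by near: n; exact: c2.
move: a1 a2 a3 a4; rewrite !ler_norml => /andP[a1 a1'] /andP[a2 a2'] /andP[a3 a3'] /andP[a4 a4'].
rewrite -eη; apply/andP; split; nra.
Unshelve. all: by end_near.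
Qed.

End P5.

Section P6.
Variable R : realType.
Implicit Types (P Q : probability R R) (g h : R -> R).

Section G.
Variables (g : R -> R) (tg : test_fun g).

Let bg := test_BC tg.

Definition Gf Q (x : R) := Ex Q (fun y => g (x + y)).

Lemma BM_gs x : BM (fun y => g (x + y)).
Proof. exact: BM_shift (BC_BM bg). Qed.

Lemma BC_gs x : BC (fun y => g (x + y)).
Proof. by apply: BC_comp bg _; apply: cont_add; [exact: cont_cst|exact: cont_id]. Qed.

Lemma Gf_bound Q (M : R) : (forall x, `|g x| <= M) -> forall x, `|Gf Q x| <= M.
Proof. by move=> hM x; apply: Ex_bound => //; exact: BM_gs. Qed.

Lemma Gf_uc (e : R) : 0 < e -> exists2 d : R, 0 < d &
  forall Q x x', `|x - x'| < d -> `|Gf Q x - Gf Q x'| <= e.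
Proof.
move=> e0; have [d d0 hd] := test_uc tg e0; exists d => // Q x x' xx'.
rewrite /Gf -ExB; [|exact: BM_gs|exact: BM_gs].
apply: Ex_bound; first by apply: BM_sub; exact: BM_gs.
move=> y; apply: ltW; apply: hd.
have -> : x + y - (x' + y) = x - x' by ring.
exact: xx'.
Qed.

Lemma Gf_cont Q : continuous (Gf Q).
Proof.
move=> x; apply/cvgrPdist_lt => e e0.
have e2 : 0 < e / 2 by rewrite divr_gt0.
have [d d0 hd] := Gf_uc e2.
near=> z.
have : `|x - z| < d by near: z; apply/nbhs_ballP; exists d.
move/(hd Q) => h; apply: le_lt_trans h _; lra.
Unshelve. all: by end_near.
Qed.

Lemma Gf_BC Q : BC (Gf Q).
Proof.
split; first exact: Gf_cont.
have [M hM] := bg.2; exists M; exact: Gf_bound.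
Qed.

End G.

Theorem conv_vconv Ps P Qs Q : wconv Ps P -> wconv Qs Q ->
  vconv (fun n => pconv (Ps n) (Qs n)) (pconv P Q).
Proof.
move=> hP hQ g tg.
have bg := test_BC tg; have bmg := BC_BM bg.
have [M M0 hM] := BC_bound0 bg.
rewrite Ex_pconv //.
under eq_fun do rewrite Ex_pconv //.
apply/cvgrPdist_le => e e0.
pose η := e / (4 + 4 * M).
have η0 : 0 < η by rewrite divr_gt0 //; lra.
have eη : (4 + 4 * M) * η = e by rewrite /η mulrC divfK //; lra.
have [d d0 hd] := Gf_uc tg η0.
have [L hL] := tight P η0.
have bt := BC_BM (tent_BC (R:=R) L).
rewrite ExB ?Ex_cst in hL; [|exact: BM_cst|exact: bt].
(* uniform convergence on the compact *)
have K : compact [set` `[- (L + 1), L + 1]] by exact: segment_compact.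
move/compact_near_coveringP : K => /(_ nat \oo
  (fun n x => `|Gf g Q x - Gf g (Qs n) x| <= 3 * η) _).
have Hc : forall x : R, [set` `[- (L + 1), L + 1]] x ->
    \forall x' \near x & n \near \oo,
       (fun n x => `|Gf g Q x - Gf g (Qs n) x| <= 3 * η) n x'.
  move=> x _.
  have cx := cvgr_dist_le _ _ (hQ _ (BC_gs tg x)) _ η0.
  near=> x' n; rewrite /=.
  have h1 : `|x - x'| < d by near: x'; apply/nbhs_ballP; exists d.
  have h2 : `|Gf g Q x - Gf g (Qs n) x| <= η by near: n; exact: cx.
  have h3 := hd Q _ _ h1.
  have h4 := hd (Qs n) _ _ h1.
  move: h2 h3 h4; rewrite !ler_norml => /andP[h2 h2'] /andP[h3 h3'] /andP[h4 h4'].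
  apply/andP; split; lra.
move=> /(_ Hc) Hu.
have cG := cvgr_dist_le _ _ (hP _ (Gf_BC tg Q)) _ η0.
have cT := cvgr_dist_le _ _ (hP _ (tent_BC L)) _ η0.
near=> n.
have bG := BC_BM (Gf_BC tg Q); have bGn := BC_BM (Gf_BC tg (Qs n)).
have Hun : forall x, [set` `[- (L + 1), L + 1]] x -> `|Gf g Q x - Gf g (Qs n) x| <= 3 * η.
  by near: n; exact: Hu.
have hpt : forall x, `|Gf g Q x - Gf g (Qs n) x| <= 3 * η + 2 * M * (1 - tent L x).
  move=> x; have [xL|xL] := leP `|x| (L + 1).
    have : `|Gf g Q x - Gf g (Qs n) x| <= 3 * η.
      by apply: Hun => /=; rewrite in_itv /= -ler_norml.
    have := tent_le1 L x; nra.
  rewrite tent0 ?subr0 ?mulr1; last exact: ltW.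
  apply: le_trans (ler_normB _ _) _.
  have := Gf_bound tg Q hM x; have := Gf_bound tg (Qs n) hM x; lra.
have a1 : `|Ex (Ps n) (fun x => Gf g Q x - Gf g (Qs n) x)| <=
          3 * η + 2 * M * (1 - Ex (Ps n) (tent L)).
  apply: le_trans (Ex_abs _ _) _; first exact: BM_sub.
  have -> : 3 * η + 2 * M * (1 - Ex (Ps n) (tent L)) =
     Ex (Ps n) (fun x => 3 * η + 2 * M * (1 - tent L x)).
    rewrite ExD; [|exact: BM_cst|apply: BM_mul; [exact: BM_cst|apply: BM_sub => //; exact: BM_cst]].
    rewrite Ex_cst ExZ ?ExB ?Ex_cst //; [exact: BM_cst|apply: BM_sub => //; exact: BM_cst].
  apply: Ex_le => //.
  - by apply: BM_abs; exact: BM_sub.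
  - by apply: BM_add; [exact: BM_cst|apply: BM_mul; [exact: BM_cst|apply: BM_sub => //; exact: BM_cst]].
rewrite ExB // in a1.
have a2 : `|Ex P (Gf g Q) - Ex (Ps n) (Gf g Q)| <= η by near: n; exact: cG.
have a3 : `|Ex P (tent L) - Ex (Ps n) (tent L)| <= η by near: n; exact: cT.
rewrite -/(Gf g (Qs n)) -/(Gf g Q).
move: a1 a2 a3; rewrite !ler_norml => /andP[a1 a1'] /andP[a2 a2'] /andP[a3 a3'].
rewrite -eη; apply/andP; split; nra.
Unshelve. all: by end_near.
Qed.

End P6.

Section P7.
Variable R : realType.
Implicit Types (P Q : probability R R) (g h : R -> R).

Lemma meq_sym (m1 m2 : set R -> \bar R) : meq m1 m2 -> meq m2 m1.
Proof. by move=> e A mA; rewrite e. Qed.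

Lemma meq_trans (m1 m2 m3 : set R -> \bar R) : meq m1 m2 -> meq m2 m3 -> meq m1 m3.
Proof. by move=> e1 e2 A mA; rewrite e1 ?e2. Qed.

Definition ppush P h (mh : measurable_fun setT h) : probability R R :=
  pk (push_prob (prob_is P) mh).

Lemma Ex_ppush P h (mh : measurable_fun setT h) g : BM g ->
  Ex (ppush P mh) g = Ex P (fun x => g (h x)).
Proof.
move=> bg; have [mg [M hM]] := bg.
rewrite /Ex /Rintegral; congr fine.
rewrite (meq_int _ _ (pk_meq _)).
rewrite [LHS](_ : _ = (\int[pushforward P h]_x (g x)%:E)%E) //.
rewrite integral_pushforward //; last 2 first.
- exact/measurable_realfun.measurable_EFinP.
- rewrite preimage_setT; apply: (BM_int P (g := fun x => g (h x))).
  by split; [exact: measurableT_comp|exists M].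
Qed.

Lemma wconv_push Ps P h (mh : measurable_fun setT h) : continuous h ->
  wconv Ps P -> wconv (fun n => ppush (Ps n) mh) (ppush P mh).
Proof.
move=> ch hw g bg.
have E : forall Q, Ex (ppush Q mh) g = Ex Q (fun x => g (h x)).
  by move=> Q; apply: Ex_ppush; exact: BC_BM.
rewrite E; under eq_fun do rewrite E.
by apply: hw; exact: BC_comp.
Qed.

Lemma delta_prob (a : R) : is_probability (delta a).
Proof. exact: (prob_is (@dirac _ R a R)). Qed.

Definition pdelta (a : R) : probability R R := pk (delta_prob a).

Fixpoint pconvn P (n : nat) : probability R R :=
  match n with
  | 0%N => pdelta 0
  | n'.+1 => pconv P (pconvn P n')
  end.

Lemma convn_meq (rho : set R -> \bar R) (hr : is_probability rho) n :
  meq (convn rho n) (pconvn (pk hr) n).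
Proof.
elim: n => [|n IH]. exact: meq_sym (pk_meq (delta_prob 0)).
apply: meq_trans (meq_sym (pk_meq _)).
exact: meq_conv (meq_sym (pk_meq _)) IH.
Qed.

Lemma wconv_cst P : wconv (fun _ => P) P.
Proof. by move=> g _; exact: cvg_cst. Qed.

Lemma wconv_pconvn Ps P n : wconv Ps P ->
  wconv (fun k => pconvn (Ps k) n) (pconvn P n).
Proof.
move=> hw; elim: n => [|n IH] /=; first exact: wconv_cst.
by apply: vconv_wconv; exact: conv_vconv.
Qed.

Lemma wconv_pconv_l (Q : probability R R) Ps P : wconv Ps P ->
  wconv (fun k => pconv Q (Ps k)) (pconv Q P).
Proof. by move=> hw; apply: vconv_wconv; apply: conv_vconv => //; exact: wconv_cst. Qed.

End P7.

Section P8.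
Variable R : realType.
Variable lam : R.
Hypothesis lam0 : 0 < lam.
Implicit Types (P Q : probability R R) (g h : R -> R).

Local Notation Pn := (poissonP lam).

Lemma Pn_ge0 n : 0 <= Pn n.
Proof. by rewrite /poissonP mulr_ge0 // ?invr_ge0 // mulr_ge0 ?expR_ge0 // exprn_ge0 // ltW. Qed.

Lemma sum_Pn : (\sum_(n <oo) (Pn n)%:E)%E = 1%E.
Proof.
have h1 : (poisson_prob lam 0 setT = 1)%E by exact: probability_setT.
rewrite -h1 /poisson_prob lam0 -nneseries_esumT; last by move=> n; rewrite lee_fin poisson_pmf_ge0.
apply: eq_eseriesr => n _; congr EFin.
by rewrite /poisson_pmf lam0 /poissonP; ring.
Qed.

Definition mix (m : nat -> probability R R) : set R -> \bar R :=
  fun A => (\sum_(0 <= n <oo) ((Pn n)%:E * m n A))%E.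

Definition MS (m : nat -> probability R R) :=
  mseries (fun n => mscale (NngNum (Pn_ge0 n)) (m n)) 0.

Lemma mixE m : mix m = MS m.
Proof. by []. Qed.

Lemma mix_prob m : is_probability (mix m).
Proof.
have hT : mix m setT = 1%E.
  rewrite /mix -sum_Pn; apply: eq_eseriesr => n _.
  by rewrite [X in (_ * X)%E](_ : _ = 1%E) ?mule1 //; exact: probability_setT.
split => //; rewrite mixE //; exact: measure_semi_sigma_additive.


Qed.

Lemma mix_int m g : BM g -> (forall x, 0 <= g x) ->
  (\int[mix m]_x (g x)%:E)%E = (\sum_(n <oo) (Pn n * Ex (m n) g)%:E)%E.
Proof.
move=> bg g0; have mg := bg.1.
rewrite mixE /MS ge0_integral_measure_series //; last 2 first.
- by move=> x _; rewrite lee_fin.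
- exact/measurable_realfun.measurable_EFinP.
apply: eq_eseriesr => n _.
rewrite ge0_integral_mscale //; last 2 first.
- exact/measurable_realfun.measurable_EFinP.
- by move=> x _; rewrite lee_fin.
by rewrite ExE // EFinM.
Qed.


Lemma mix_cvg (ms : nat -> nat -> probability R R) (m : nat -> probability R R) :
  (forall n, wconv (fun k => ms k n) (m n)) ->
  wconv (fun k => pk (mix_prob (ms k))) (pk (mix_prob m)).
Proof.
move=> hw g bg; have [M M0 hM] := BC_bound0 bg.
pose phi := fun x => g x + M.
have bphi : BC phi by apply: BC_add bg (BC_cst M).
have mphi := BC_BM bphi.
have phi0 : forall x, 0 <= phi x.
  by move=> x; rewrite /phi; have := hM x; rewrite ler_norml => /andP[? ?]; lra.
have phiM : forall x, `|phi x| <= 2 * M.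
  by move=> x; rewrite /phi; have := hM x; rewrite !ler_norml => /andP[? ?]; apply/andP; split; lra.
have E1 : forall m', Ex (pk (mix_prob m')) g = Ex (pk (mix_prob m')) phi - M.
  by move=> m'; rewrite /phi ExD ?Ex_cst; [lra|exact: BC_BM|exact: BM_cst].
have E2 : forall m', (Ex (pk (mix_prob m')) phi)%:E =
    (\int[counting]_n (Pn n * Ex (m' n) phi)%:E)%E.
  move=> m'; rewrite -ExE // (meq_int _ _ (pk_meq _)) mix_int //.
  rewrite ge0_integral_count // => n; rewrite lee_fin mulr_ge0 ?Pn_ge0 //.
  exact: Ex_ge0.
rewrite E1; under eq_fun do rewrite E1.
apply: cvgB; last exact: cvg_cst.
have := @dominated_convergence _ _ R counting setT measurableT
  (fun k n => (Pn n * Ex (ms k n) phi)%:E) (fun n => (Pn n * Ex (m n) phi)%:E)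
  (fun n => (Pn n * (2 * M))%:E).
case.
- by [].
- by [].
- apply: aeW => n _; apply: cvg_EFin; first exact: nearW.
  by apply: cvgMr; exact: hw.
- apply/integrableP; split; first by [].
  rewrite ge0_integral_count; last by move=> n.
  have hge : forall k, (0 <= (Pn k * (2 * M))%:E)%E by move=> k; rewrite lee_fin mulr_ge0 ?Pn_ge0 // mulr_ge0.
  under eq_eseriesr do rewrite gee0_abs ?hge // EFinM muleC.
  by rewrite nneseriesZl ?sum_Pn ?mule1 ?ltry // => n _; rewrite lee_fin Pn_ge0.
- apply: aeW => n k _; rewrite /= lee_fin normrM ger0_norm ?Pn_ge0 //.
  by apply: ler_wpM2l; [exact: Pn_ge0|exact: Ex_bound].
move=> _ _ h.
have h' : (fun k => (Ex (pk (mix_prob (ms k))) phi)%:E) @ \oo --> (Ex (pk (mix_prob m)) phi)%:E.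
  by rewrite E2; under eq_fun do rewrite E2; exact: h.
by apply: (fine_cvg h').
Qed.

End P8.

Section P9.
Variable R : realType.
Variable lam : R.
Hypothesis lam0 : 0 < lam.

Lemma final_generic (S : (set R -> \bar R) -> set R -> \bar R)
    (mm : probability R R -> nat -> probability R R) :
  (forall rho (hr : is_probability rho), meq (S rho) (mix lam (mm (pk hr)))) ->
  (forall Ps P, wconv Ps P -> forall n, wconv (fun k => mm (Ps k) n) (mm P n)) ->
  continuous_on_P S.
Proof.
move=> hS hmm; split.
  move=> rho [hr _]; exact: is_prob_meq (mix_prob lam0 _) (hS rho hr).
move=> rhos rho hs [hr _] hw.
pose Ps := fun k => pk (hs k).1.
pose P := pk hr.
have vc : vconv Ps P.
  move=> g tg; have bg := BC_BM (test_BC tg).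
  have := hw g tg.
  rewrite (meq_int _ _ (meq_sym (pk_meq hr))) ExE //.
  under eq_fun do rewrite (meq_int _ _ (meq_sym (pk_meq (hs _).1))) ExE //.
  by move=> h; apply: (fine_cvg h).
have wc := vconv_wconv vc.
have mc := mix_cvg (lam0 := lam0) (fun n => hmm _ _ wc n).
move=> phi tphi; have bphi := BC_BM (test_BC tphi).
have E : forall rho' (hr' : is_probability rho'),
    (\int[S rho']_x (phi x)%:E)%E = (Ex (pk (mix_prob lam0 (mm (pk hr')))) phi)%:E.
  move=> rho' hr'; rewrite -ExE //; apply: meq_int.
  exact: meq_trans (hS rho' hr') (meq_sym (pk_meq _)).
rewrite (E rho hr); under eq_fun do rewrite (E _ (hs _).1).
apply: cvg_EFin; first exact: nearW.
exact: mc (test_BC tphi).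
Qed.

End P9.

Section P10.
Variable R : realType.
Variables (f : R -> R) (lam : R).
Hypothesis f_cont : continuous f.
Hypothesis lam0 : 0 < lam.

Lemma hk_cont k : continuous (hk f k).
Proof. by apply: cont_mul => //; exact: cont_cst. Qed.

Definition mh k : measurable_fun setT (hk f k) :=
  measurable_realfun.continuous_measurable_fun (hk_cont (k:=k)).

Definition mmX (x : R) (P : probability R R) (n : nat) : probability R R :=
  ppush (pconv (pdelta x) (pconvn P n)) (mh n.+1).

Definition mmS (P : probability R R) (n : nat) : probability R R :=
  ppush (pconvn P n.+1) (mh n.+1).

Lemma SigmaX_cont x : continuous_on_P (SigmaX f lam x).
Proof.
apply: (final_generic lam0 (mm := mmX x)).
- move=> rho hr A mA; rewrite /SigmaX /mix; apply: eq_eseriesr => n _; congr (_ * _)%E.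
  rewrite /mmX /ppush pkE //.
  apply: meq_push => //; last exact: mh.
  apply: meq_trans (meq_sym (pk_meq _)).
  exact: meq_conv (meq_sym (pk_meq (delta_prob x))) (convn_meq hr n).
- move=> Ps P wc n; apply: wconv_push; first exact: hk_cont.
  by apply: wconv_pconv_l; exact: wconv_pconvn.
Qed.

Lemma Sigma_cont : continuous_on_P (Sigma f lam).
Proof.
apply: (final_generic lam0 (mm := mmS)).
- move=> rho hr A mA; rewrite /Sigma /mix; apply: eq_eseriesr => n _; congr (_ * _)%E.
  rewrite /mmS /ppush pkE //.
  apply: meq_push => //; last exact: mh.
  exact: (convn_meq hr n.+1).
- move=> Ps P wc n; apply: wconv_push; first exact: hk_cont.
  exact: wconv_pconvn.
Qed.

End P10.


End Aux.
Import Aux.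

Theorem theorem6 (R : realType) (f : R -> R) (a b lam : R)
  (f_cont : continuous f) (a_gt0 : 0 < a)
  (f_bound : forall x : R, `|f x| <= a * cosh (b * x))
  (lam_gt0 : 0 < lam) :
  (forall x : R, continuous_on_P (SigmaX f lam x)) /\
  continuous_on_P (Sigma f lam).
Proof.
split; first by move=> x; exact: SigmaX_cont.
exact: Sigma_cont.
Qed.
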